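(* Let $n$ be even. The signed cardinality statistic $SC$ is $0$-mesic under rowmotion on $\mathcal{IC}([n])$: its average over every rowmotion orbit equals $0$.
   Context: $[n]$ denotes the chain poset $1<2<\cdots<n$, ranked with $\mathrm{rk}(i)=i-1$. A subset $I\subseteq P$ of a finite poset is interval-closed if for all $x,y\in I$ and $z\in P$ with $x\le z\le y$ we have $z\in I$; $\mathcal{IC}(P)$ is the set of interval-closed subsets. For $x\in P$ the toggle $t_x$ sends $I$ to $I\triangle\{x\}$ if that is interval-closed and to $I$ otherwise. Rowmotion is $\mathrm{Row}=t_{x_1}\circ\cdots\circ t_{x_N}$, where $(x_1,\dots,x_N)$ is a linear extension of $P$ (toggling from the top down). For a ranked poset with minimum rank $0$, $SC(x)=1$ if $\mathrm{rk}(x)$ is even and $-1$ if odd, and $SC(I)=\sum_{x\in I}SC(x)$. A statistic is $c$-mesic if its average over every rowmotion orbit is $c$. *)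

(* Defs.v *)
From mathcomp Require Import all_boot all_order all_algebra.
Set Implicit Arguments. Unset Strict Implicit. Unset Printing Implicit Defensive.
Import GRing.Theory Num.Theory.

(* The chain [n] = 1 < 2 < ... < n is modelled by 'I_n: the ordinal i : 'I_n
   stands for the element i+1 of [n]; its order is the order of nat and its
   rank is rk(i+1) = i = val i. *)

Definition interval_closed (n : nat) (I : {set 'I_n}) : bool :=
  [forall x in I, forall y in I, forall z : 'I_n,
     ((x <= z)%N && (z <= y)%N) ==> (z \in I)].

Definition toggle (n : nat) (x : 'I_n) (I : {set 'I_n}) : {set 'I_n} :=
  let J := if x \in I then I :\ x else x |: I in
  if interval_closed J then J else I.

(* Rowmotion Row = t_{x_1} o ... o t_{x_N} for the (unique) linear extension
   (x_1,...,x_N) = (0,1,...,n-1) of the chain: toggles from the top down,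
   i.e. t_{n-1} is applied first and t_0 last. *)
Definition rowmotion (n : nat) (I : {set 'I_n}) : {set 'I_n} :=
  foldr (fun x J => toggle x J) I (enum 'I_n).

Definition SC_elt (n : nat) (x : 'I_n) : int := if odd x then (-1)%R else 1%R.
Definition SC (n : nat) (I : {set 'I_n}) : int := (\sum_(x in I) SC_elt x)%R.

Definition orbit_average (n : nat) (f : {set 'I_n} -> int) (I : {set 'I_n}) : rat :=
  ((\sum_(J <- orbit (@rowmotion n) I) (f J)%:~R) / (size (orbit (@rowmotion n) I))%:R)%R.

Definition mesic (n : nat) (f : {set 'I_n} -> int) (c : rat) : Prop :=
  forall I : {set 'I_n}, interval_closed I -> orbit_average f I = c.

(* Main.v *)
Require Import Defs.
From mathcomp Require Import all_boot all_order all_algebra.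
From mathcomp Require Import zify lra.
Import GRing.Theory Num.Theory.

Ltac arith := simpl; (lia || (left; lia) || (right; lia)).

Section Aux.
Variable n : nat.

Definition itv (a b : nat) : {set 'I_n} := [set x : 'I_n | (a <= x) && (x < b)].

Lemma ic_mem {I : {set 'I_n}} {x y z : 'I_n} :
  interval_closed I -> x \in I -> y \in I -> x <= z -> z <= y -> z \in I.
Proof.
move=> /forall_inP /(_ x) H hx hy xz zy.
move: (H hx) => /forall_inP /(_ y hy) /forallP /(_ z) /implyP; apply.
by rewrite xz zy.
Qed.

Lemma itv_ic a b : interval_closed (itv a b).
Proof.
apply/forall_inP => x; rewrite inE => /andP[ax _].
apply/forall_inP => y; rewrite inE => /andP[_ yb].
apply/forallP => z; apply/implyP => /andP[xz zy].
rewrite inE (leq_trans ax xz) (leq_ltn_trans zy yb) //.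
Qed.

Lemma ic_cases (I : {set 'I_n}) : interval_closed I ->
  I = set0 \/ exists a b, a < b <= n /\ I = itv a b.
Proof.
move=> hI; case: (set_0Vmem I) => [->|[x0 hx0]]; [by left | right].
case: (arg_minnP (fun x : 'I_n => val x) hx0) => lo hlo minlo.
case: (arg_maxnP (fun x : 'I_n => val x) hx0) => hi hhi maxhi.
exists lo, hi.+1; split.
  by move: (minlo hi hhi) (ltn_ord hi) => /=; lia.
apply/setP => z; rewrite inE; apply/idP/idP.
  by move=> hz; move: (minlo z hz) (maxhi z hz) => /=; lia.
by move=> /andP[h1 h2]; apply: (ic_mem (z := z) hI hlo hhi); lia.
Qed.

Lemma toggle_ic (x : 'I_n) (I : {set 'I_n}) : interval_closed I -> interval_closed (toggle x I).
Proof. by rewrite /toggle /=; case: ifP. Qed.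

Lemma toggleK (x : 'I_n) (I : {set 'I_n}) : interval_closed I -> toggle x (toggle x I) = I.
Proof.
move=> hI; rewrite {2}/toggle /=.
case: ifP => hJ; last by rewrite /toggle /= hJ.
rewrite /toggle /=.
case hx: (x \in I).
  rewrite in_setD1 eqxx /= setD1K // hI //.
by rewrite in_setU1 eqxx /= setU1K ?hx // hI.
Qed.

Lemma foldr_ic (s : seq 'I_n) (I : {set 'I_n}) : interval_closed I ->
  interval_closed (foldr (fun x J => toggle x J) I s).
Proof. by move=> hI; elim: s => //= x s IH; apply: toggle_ic. Qed.

Lemma foldr_inj (s : seq 'I_n) (I1 I2 : {set 'I_n}) : interval_closed I1 -> interval_closed I2 ->
  foldr (fun x J => toggle x J) I1 s = foldr (fun x J => toggle x J) I2 s -> I1 = I2.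
Proof.
move=> h1 h2; elim: s => //= x s IH E; apply: IH.
by rewrite -(toggleK x _ (foldr_ic s _ h1)) E toggleK // foldr_ic.
Qed.

Lemma row_ic (I : {set 'I_n}) : interval_closed I -> interval_closed (rowmotion I).
Proof. exact: foldr_ic. Qed.

Lemma row_inj (I1 I2 : {set 'I_n}) : interval_closed I1 -> interval_closed I2 ->
  rowmotion I1 = rowmotion I2 -> I1 = I2.
Proof. exact: foldr_inj. Qed.

Lemma not_ic_toggle (x : 'I_n) (I : {set 'I_n}) :
  ~~ interval_closed (if x \in I then I :\ x else x |: I) -> toggle x I = I.
Proof. by rewrite /toggle /= => /negbTE ->. Qed.

Lemma L1 (x : 'I_n) a : a <= x -> toggle x (itv a x.+1) = itv a x.
Proof.
move=> ax; have hx : x \in itv a x.+1 by rewrite inE ax ltnSn.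
have E : itv a x.+1 :\ x = itv a x.
  by apply/setP => z; rewrite !inE -val_eqE /=; lia.
by rewrite /toggle /= hx E itv_ic.
Qed.

Lemma L2 (x : 'I_n) b : x < b -> toggle x (itv x b) = itv x.+1 b.
Proof.
move=> xb; have hx : x \in itv x b by rewrite inE leqnn xb.
have E : itv x b :\ x = itv x.+1 b.
  by apply/setP => z; rewrite !inE -val_eqE /=; lia.
by rewrite /toggle /= hx E itv_ic.
Qed.

Lemma L4 (x : 'I_n) b : x < b -> toggle x (itv x.+1 b) = itv x b.
Proof.
move=> xb; have hx : x \notin itv x.+1 b by rewrite inE ltnn.
have E : x |: itv x.+1 b = itv x b.
  by apply/setP => z; rewrite !inE -val_eqE /=; lia.
by rewrite /toggle /= (negbTE hx) E itv_ic.
Qed.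

Lemma L5 (x : 'I_n) a : a <= x -> toggle x (itv a x) = itv a x.+1.
Proof.
move=> ax; have hx : x \notin itv a x by rewrite inE ltnn andbF.
have E : x |: itv a x = itv a x.+1.
  by apply/setP => z; rewrite !inE -val_eqE /=; lia.
by rewrite /toggle /= (negbTE hx) E itv_ic.
Qed.

Lemma L3 (x : 'I_n) a b : a < x -> x.+1 < b -> b <= n -> toggle x (itv a b) = itv a b.
Proof.
move=> ax xb bn; apply: not_ic_toggle.
have hx : x \in itv a b by rewrite inE; lia.
rewrite hx; apply/negP => hic.
have ha : a < n by lia.
have hs : x.+1 < n by lia.
have : x \in itv a b :\ x.
  apply: (ic_mem (x := Ordinal ha) (y := Ordinal hs) hic) => /=; try lia.
    by rewrite !inE -val_eqE /=; lia.
  by rewrite !inE -val_eqE /=; lia.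
by rewrite !inE eqxx.
Qed.

Lemma L6 (x : 'I_n) a b : a < b -> b <= n -> (x.+1 < a \/ b < x) ->
  toggle x (itv a b) = itv a b.
Proof.
move=> ab bn hx; apply: not_ic_toggle.
have hxn : x \notin itv a b by rewrite inE; lia.
rewrite (negbTE hxn); apply/negP => hic.
case: hx => hx.
  have ha : a < n by lia.
  have hs : x.+1 < n by lia.
  have : Ordinal hs \in x |: itv a b.
    apply: (ic_mem (x := x) (y := Ordinal ha) hic) => /=; try lia.
      by rewrite !inE eqxx.
    by rewrite !inE -val_eqE /=; lia.
  by rewrite !inE -val_eqE /=; lia.
have ha : a < n by lia.
have hs : b < n by have := ltn_ord x; lia.
have : Ordinal hs \in x |: itv a b.
  apply: (ic_mem (x := Ordinal ha) (y := x) hic) => /=; try lia.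
    by rewrite !inE -val_eqE /=; lia.
  by rewrite !inE eqxx.
by rewrite !inE -val_eqE /=; lia.
Qed.

Definition togn (k : nat) (I : {set 'I_n}) : {set 'I_n} :=
  oapp (fun y : 'I_n => toggle y I) I (insub k).

Lemma togn_ord (y : 'I_n) (I : {set 'I_n}) : togn y I = toggle y I.
Proof. by rewrite /togn valK. Qed.

Definition P (I : {set 'I_n}) (k : nat) := foldr togn I (iota k (n - k)).

Lemma P_n (I : {set 'I_n}) : P I n = I.
Proof. by rewrite /P subnn. Qed.

Lemma P_S (I : {set 'I_n}) k (hk : k < n) : P I k = toggle (Ordinal hk) (P I k.+1).
Proof. by rewrite /P -(subnSK hk) /= -(togn_ord (Ordinal hk)). Qed.

Lemma row_P (I : {set 'I_n}) : rowmotion I = P I 0.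
Proof.
rewrite /P subn0 -val_enum_ord foldr_map /rowmotion.
by elim: (enum 'I_n) => //= x s ->; rewrite togn_ord.
Qed.

Lemma down_ind (Q : nat -> Prop) lo hi : Q hi ->
  (forall k, lo <= k -> k < hi -> Q k.+1 -> Q k) -> forall k, lo <= k <= hi -> Q k.
Proof.
move=> Qhi step.
have H : forall d, d <= hi - lo -> Q (hi - d).
  elim=> [|d IH] hd; first by rewrite subn0.
  apply: step; first lia. lia.
  by rewrite subnSK; [apply: IH; lia | lia].
move=> k /andP[h1 h2]; have -> : k = hi - (hi - k) by lia.
apply: H; lia.
Qed.

Lemma rowA a b : a < b -> b < n -> rowmotion (itv a b) = itv a.+1 b.+1.
Proof.
move=> ab bn; set I := itv a b.
have H1 : forall k, b.+1 <= k <= n -> P I k = I.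
  apply: down_ind; first exact: P_n.
  move=> k h1 h2 IH; rewrite (P_S _ _ h2) IH L6 //; arith.
have H2 : P I b = itv a b.+1.
  rewrite (P_S _ _ bn) H1; last lia.
  by rewrite L5 //; arith.
have H3 : forall k, a.+1 <= k <= b -> P I k = itv a b.+1.
  apply: down_ind => // k h1 h2 IH.
  have hk : k < n by lia.
  rewrite (P_S _ _ hk) IH L3 //; arith.
have H4 : P I a = itv a.+1 b.+1.
  have ha : a < n by lia.
  rewrite (P_S _ _ ha) H3; last lia.
  by rewrite L2 //; arith.
have H5 : forall k, 0 <= k <= a -> P I k = itv a.+1 b.+1.
  apply: down_ind => // k h1 h2 IH.
  have hk : k < n by lia.
  rewrite (P_S _ _ hk) IH L6 //; arith.
by rewrite row_P H5.
Qed.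

Lemma rowB a : a < n -> rowmotion (itv a n) = itv 0 a.
Proof.
move=> an; set I := itv a n.
have H1 : forall k, a <= k <= n -> P I k = itv a k.
  apply: down_ind; first exact: P_n.
  move=> k h1 h2 IH; rewrite (P_S _ _ h2) IH L1 //.
have H2 : forall k, 0 <= k <= a -> P I k = itv k a.
  apply: down_ind; first by rewrite H1 // leqnn; lia.
  move=> k h1 h2 IH; have hk : k < n by lia.
  by rewrite (P_S _ _ hk) IH L4.
by rewrite row_P H2.
Qed.

Lemma rowC : rowmotion set0 = itv 0 n.
Proof.
have E : (set0 : {set 'I_n}) = itv n n.
  by apply/setP => z; rewrite !inE; lia.
have H : forall k, 0 <= k <= n -> P set0 k = itv k n.
  apply: down_ind; first by rewrite P_n.
  move=> k h1 h2 IH; by rewrite (P_S _ _ h2) IH L4.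
by rewrite row_P H.
Qed.

Definition g (i : nat) : int := if odd i then (-1)%R else 1%R.
Definition S a b : int := (\sum_(a <= i < b) g i)%R.

Lemma SC_itv a b : a <= b -> b <= n -> SC (itv a b) = S a b.
Proof.
move=> ab bn; rewrite /SC /S.
rewrite (@big_nat_widenl _ _ _ a 0 b) // (@big_nat_widen _ _ _ 0 b n) // big_mkord.
apply: eq_big => [x|x _]; first by rewrite inE.
by [].
Qed.

Lemma S_shift a b : a <= b -> S a.+1 b.+1 = (- S a b)%R.
Proof.
move=> ab; rewrite /S big_add1 /= -sumrN.
by apply: eq_bigr => i _; rewrite /g /=; case: (odd i).
Qed.

Lemma S_cat a b c : a <= b -> b <= c -> S a c = (S a b + S b c)%R.
Proof. by move=> h1 h2; rewrite /S (@big_cat_nat _ _ _ b). Qed.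

Lemma S_even m : S 0 m.*2 = 0%R.
Proof.
elim: m => [|m IH]; first by rewrite /S big_geq.
rewrite doubleS /S !big_nat_recr //= -/(S 0 m.*2) IH /g /= odd_double /=.
by rewrite add0r addrN.
Qed.

Lemma SC_row (hn : ~~ odd n) (I : {set 'I_n}) : interval_closed I -> SC (rowmotion I) = (- SC I)%R.
Proof.
have Sn : S 0 n = 0%R.
  by rewrite -[in S 0 n](odd_double_half n) (negbTE hn) add0n S_even.
move=> /ic_cases [->|[a [b [/andP[ab bn] ->]]]].
  by rewrite rowC SC_itv // Sn /SC big_set0 oppr0.
case: (ltnP b n) => hb.
  rewrite rowA // !SC_itv //; try lia.
  by rewrite S_shift //; lia.
have -> : b = n by lia.
rewrite rowB; last lia.
rewrite !SC_itv //; try lia.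
have E := @S_cat 0 a n (leq0n a) (ltnW (leq_trans ab bn)).
by move: E; rewrite Sn; lia.
Qed.

End Aux.

Local Open Scope ring_scope.

Lemma traject_map (T : Type) (f : T -> T) x m :
  map f (traject f x m) = traject f (f x) m.
Proof. by elim: m x => //= m IH x; rewrite IH. Qed.

Lemma sum_shift (T : Type) (f : T -> T) (h : T -> rat) x m :
  iter m f x = x ->
  (\sum_(J <- traject f x m) h (f J) = \sum_(J <- traject f x m) h J)%R.
Proof.
move=> hx; rewrite -(big_map f xpredT h) traject_map.
have E := trajectSr f x m; rewrite trajectS hx in E.
have := congr1 (fun s => \sum_(J <- s) h J)%R E.
rewrite /= big_cons big_rcons /= => E2.
by apply: (@addIr _ (h x)); rewrite addrC E2.
Qed.

Theorem proposition3p16 (n : nat) (hn : ~~ odd n) : mesic (@SC n) 0%R.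
Proof.
move=> I hI; rewrite /orbit_average.
suff -> : (\sum_(J <- orbit (@rowmotion n) I) (SC J)%:~R = 0 :> rat)%R by rewrite GRing.mul0r.
set s := orbit _ I.
have fin : {homo (@rowmotion n) : x / x \in [pred J | interval_closed J]}.
  by move=> x; rewrite !inE; apply: row_ic.
have inj : {in [pred J | interval_closed J] &, injective (@rowmotion n)}.
  by move=> x y; rewrite !inE => hx hy; apply: row_inj.
have hit := iter_order_in fin inj (x := I) hI.
have icit : forall k, interval_closed (iter k (@rowmotion n) I).
  by elim=> //= k IH; apply: row_ic.
have hs : {in s, forall J, ((SC (rowmotion J))%:~R : rat) = (- (SC J)%:~R)%R}.
  move=> J /trajectP [k _ ->].
  by rewrite SC_row // intrN.
have E := @sum_shift _ _ (fun J : {set 'I_n} => ((SC J)%:~R : rat)) _ _ hit.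
rewrite -/s in E.
rewrite (eq_big_seq _ hs) sumrN in E.
set t := (\sum_(J <- s) _)%R in E *.
lra.
Qed.
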